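(* With the notation of the context, let $\bm x_\alpha,\bm x_\beta$ be sample points and let $\bm y_0=\bm x_\alpha,\bm y_1,\dots,\bm y_m=\bm x_\beta$ be all the sample points lying on the closed segment $[\bm x_\alpha,\bm x_\beta]$, ordered along the segment, with associated affine functions $v_0,\dots,v_m$ (the local pieces of $u^*$ at these sample points). Assume that for every $r=0,\dots,m-1$, $$\big(v_r(\bm y_r)-v_{r+1}(\bm y_r)\big)\cdot\big(v_r(\bm y_{r+1})-v_{r+1}(\bm y_{r+1})\big)\le 0$$ (this is the termination condition of the bisection procedure that repeatedly inserts midpoints between consecutive sample points on the segment whenever the two signs agree). Then for all sample points $\bm x_i,\bm x_k$ lying on $[\bm x_\alpha,\bm x_\beta]$, $$\min_{j\in J_{\geq,i}}u_j(\bm x_k)\le u_k(\bm x_k)\qquad\text{and}\qquad \max_{j\in J_{\leq,i}}u_j(\bm x_k)\ge u_k(\bm x_k).$$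
   Context: Let $\Omega\subseteq\mathbb{R}^{n_x}$ be a convex polyhedron and $u^*:\Omega\to\mathbb{R}$ a continuous piecewise affine (PWA) function: $\Omega$ is the union of finitely many closed convex polyhedra (local regions) with pairwise disjoint interiors, and on each local region $u^*$ coincides with an affine function (its local piece). Sample points $\bm x_1,\dots,\bm x_{N_s}\in\Omega$ are given, each lying in the interior of a unique order (UO) region $\Gamma(\bm x_i)$ (a closed polyhedron inside a local region on whose interior the order of all distinct local pieces of $u^*$ is constant; equivalently, no two distinct local pieces of $u^*$ take equal values at $\bm x_i$), and $u_i$ denotes the local piece of $u^*$ on $\Gamma(\bm x_i)$, so $u_i(\bm x_i)=u^*(\bm x_i)$. Define $J_{\geq,i}=\{j\in\{1,\dots,N_s\}: u_j(\bm x_i)\ge u_i(\bm x_i)\}$ and $J_{\leq,i}=\{j\in\{1,\dots,N_s\}: u_j(\bm x_i)\le u_i(\bm x_i)\}$. *)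

(* Defs.v *)
From HB Require Import structures.
From mathcomp Require Import all_boot all_order all_algebra.
From mathcomp Require Import all_classical all_reals all_analysis.
Set Implicit Arguments. Unset Strict Implicit. Unset Printing Implicit Defensive.
Import Order.TTheory GRing.Theory Num.Theory.
Import numFieldNormedType.Exports.
Local Open Scope classical_set_scope.
Local Open Scope ring_scope.

Definition dotp (R : realType) (n : nat) (a x : 'rV[R]_n) : R :=
  \sum_(j < n) a 0 j * x 0 j.

(* An affine function x |-> a . x + b, represented by the pair (a, b). *)
Definition affine (R : realType) (n : nat) := ('rV[R]_n * R)%type.

Definition aeval (R : realType) (n : nat) (f : affine R n) (x : 'rV[R]_n) : R :=
  dotp f.1 x + f.2.

Definition polyhedron (R : realType) (n : nat) (hs : seq ('rV[R]_n * R)) :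
  set 'rV[R]_n := [set x | all (fun h => dotp h.1 x <= h.2) hs].

Definition segment (R : realType) (n : nat) (a b : 'rV[R]_n) : set 'rV[R]_n :=
  [set x | exists2 t : R, 0 <= t <= 1 & x = (1 - t) *: a + t *: b].

(* Gamma is a unique order (UO) region of the PWA partition
   (regions P : 'I_L -> set, local pieces pc : 'I_L -> affine) lying in the
   local region l: Gamma is a closed polyhedron contained in P l, and on the
   interior of Gamma the order of all distinct local pieces is constant. *)
Definition UO_region (R : realType) (n L : nat)
  (P : 'I_L -> set 'rV[R]_n) (pc : 'I_L -> affine R n)
  (Gamma : set 'rV[R]_n) (l : 'I_L) : Prop :=
  [/\ exists hs : seq ('rV[R]_n * R), Gamma = polyhedron hs,
      Gamma `<=` P l &
      forall (p q : 'I_L), pc p <> pc q ->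
      forall x y, interior Gamma x -> interior Gamma y ->
        (aeval (pc p) x < aeval (pc q) x) = (aeval (pc p) y < aeval (pc q) y)].

(* Main.v *)
Require Import Defs.
From HB Require Import structures.
From mathcomp Require Import all_boot all_order all_algebra.
From mathcomp Require Import all_classical all_reals all_analysis.
From mathcomp Require Import zify ring lra.
Import Order.TTheory GRing.Theory Num.Theory.
Import numFieldNormedType.Exports.
Local Open Scope classical_set_scope.
Local Open Scope ring_scope.

Lemma real_aff (R : realType) (A c tp tq tr : R) :
  0 < A + tp * c -> A + tq * c <= 0 -> (tp < tq < tr) \/ (tr < tq < tp) ->
  A + tr * c <= 0.
Proof. move=> h1 h2 [/andP[h3 h4]|/andP[h3 h4]]; nra. Qed.

Lemma dotp_seg (R : realType) n (c a b : 'rV[R]_n) t :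
  dotp c ((1 - t) *: a + t *: b) = dotp c a + t * (dotp c b - dotp c a).
Proof.
rewrite /dotp.
have -> : \sum_(j < n) c 0 j * ((1 - t) *: a + t *: b) 0 j =
   (1 - t) * \sum_(j < n) c 0 j * a 0 j + t * \sum_(j < n) c 0 j * b 0 j.
  rewrite !mulr_sumr -big_split /=; apply: eq_bigr => j _; rewrite !mxE; ring.
ring.
Qed.

Lemma aeval_seg (R : realType) n (f : affine R n) (a b : 'rV[R]_n) t :
  aeval f ((1 - t) *: a + t *: b) = aeval f a + t * (aeval f b - aeval f a).
Proof. rewrite /aeval dotp_seg; ring. Qed.

Lemma dotp_dd (R : realType) n (a b : 'rV[R]_n) :
  0 <= dotp (b - a) b - dotp (b - a) a.
Proof.
rewrite /dotp -sumrB; apply: sumr_ge0 => j _.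
rewrite -mulrBr; have -> : b 0 j - a 0 j = (b - a) 0 j by rewrite !mxE.
by rewrite -expr2 sqr_ge0.
Qed.



Lemma fwd (R : realFieldType) (G : nat -> nat -> R) (m : nat)
  (Hterm : forall k, (k < m)%N ->
     (G k k - G k.+1 k) * (G k k.+1 - G k.+1 k.+1) <= 0)
  (Haff : forall j j' p q r, (p <= q)%N -> (q <= r)%N -> (r <= m)%N ->
     0 < G j p - G j' p -> G j q - G j' q <= 0 -> G j r - G j' r <= 0) :
  forall a b, (a <= b)%N -> (b <= m)%N ->
  exists j, [/\ (j <= m)%N, G a a <= G j a & G j b <= G b b].
Proof.
move=> a b ab bm.
have [j0 [aj0 j0b Hj0 Hmax]] : exists j0, [/\ (a <= j0)%N, (j0 <= b)%N, G a a <= G j0 a &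
   forall j, (j0 < j)%N -> (j <= b)%N -> G j a < G a a].
  elim: b ab {bm} => [|b IH] ab.
    have a0 : a = 0%N by lia.
    by exists 0%N; subst; split => // j; lia.
  case: (leqP a b) => [le|gt].
    case: (lerP (G a a) (G b.+1 a)) => H.
      by exists b.+1; split => // j; lia.
    have [j0 [h1 h2 h3 h4]] := IH le.
    exists j0; split => //; first lia.
    move=> j lt jb; case: (ltngtP j b.+1) => e; [apply: h4; lia| lia| by subst].
  have -> : a = b.+1 by lia.
  by exists b.+1; split => // j; lia.
have inv : forall d, (j0 + d <= b)%N -> G j0 (j0 + d)%N <= G (j0 + d)%N (j0 + d)%N.
  elim=> [|d IH] hd; first by rewrite addn0.
  have IH' := IH ltac:(lia).
  have Hk : (j0 + d < m)%N by lia.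
  have HT := Hterm _ Hk.
  rewrite addnS.
  case: (lerP (G (j0+d)%N (j0+d)%N.+1) (G (j0+d)%N.+1 (j0+d)%N.+1)) => HA.
    apply: le_trans HA.
    case: (ltngtP j0 (j0+d)%N) => e; [|lia|].
      rewrite -subr_le0; apply: (Haff _ _ a (j0+d)%N); try lia.
        by rewrite subr_gt0; apply: lt_le_trans Hj0; apply: Hmax; lia.
      by rewrite subr_le0.
    by rewrite -e.
  have HB : G (j0+d)%N (j0+d)%N <= G (j0+d)%N.+1 (j0+d)%N.
    rewrite -subr_le0; have : 0 < G (j0 + d)%N (j0 + d)%N.+1 - G (j0 + d)%N.+1 (j0 + d)%N.+1 by rewrite subr_gt0.
    move=> hp; by rewrite -(pmulr_lle0 _ hp).
  have : G j0 (j0+d)%N.+1 - G (j0+d)%N.+1 (j0+d)%N.+1 <= 0.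
    apply: (Haff _ _ a (j0+d)%N); try lia.
      by rewrite subr_gt0; apply: lt_le_trans Hj0; apply: Hmax; lia.
    rewrite subr_le0; exact: le_trans IH' HB.
  by rewrite subr_le0.
exists j0; split => //; first lia.
have := inv (b - j0)%N ltac:(lia).
by have -> : (j0 + (b - j0) = b)%N by lia.
Qed.

Lemma both (R : realFieldType) (G : nat -> nat -> R) (m : nat)
  (Hterm : forall k, (k < m)%N ->
     (G k k - G k.+1 k) * (G k k.+1 - G k.+1 k.+1) <= 0)
  (Haff : forall j j' p q r, ((p <= q <= r) || (r <= q <= p))%N ->
     (p <= m)%N -> (q <= m)%N -> (r <= m)%N ->
     0 < G j p - G j' p -> G j q - G j' q <= 0 -> G j r - G j' r <= 0) :
  forall a b, (a <= m)%N -> (b <= m)%N ->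
  exists j, [/\ (j <= m)%N, G a a <= G j a & G j b <= G b b].
Proof.
move=> a b am bm; case: (leqP a b) => ab.
  apply: (@fwd R G m Hterm _ a b ab bm) => j j' p q r pq qr rm; apply: Haff; try lia.
pose G' j p := G (m - j)%N (m - p)%N.
have HT' : forall k, (k < m)%N ->
     (G' k k - G' k.+1 k) * (G' k k.+1 - G' k.+1 k.+1) <= 0.
  move=> k km; rewrite /G'.
  have e1 : (m - k = (m - k.+1).+1)%N by lia.
  have := Hterm (m - k.+1)%N ltac:(lia); rewrite e1.
  move=> H; nra.
have HA' : forall j j' p q r, (p <= q)%N -> (q <= r)%N -> (r <= m)%N ->
     0 < G' j p - G' j' p -> G' j q - G' j' q <= 0 -> G' j r - G' j' r <= 0.
  move=> j j' p q r pq qr rm; apply: Haff; try lia.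
have [j' [h1 h2 h3]] := @fwd R G' m HT' HA' (m - a)%N (m - b)%N ltac:(lia) ltac:(lia).
have eA : (m - (m - a) = a)%N by lia.
have eB : (m - (m - b) = b)%N by lia.
move: h2 h3; rewrite /G' eA eB => h2 h3.
by exists (m - j')%N; split => //; lia.
Qed.

Theorem mainTheorem4
  (R : realType) (n : nat)
  (* Omega: a convex polyhedron *)
  (omegaH : seq ('rV[R]_n * R))
  (* the PWA function u^* with L local regions (closed convex polyhedra) *)
  (ustar : 'rV[R]_n -> R) (L : nat)
  (regH : 'I_L -> seq ('rV[R]_n * R)) (pc : 'I_L -> affine R n)
  (Hcont : {within polyhedron omegaH, continuous ustar})
  (Hcover : polyhedron omegaH = \bigcup_(l in [set: 'I_L]) polyhedron (regH l))
  (Hdisj : forall l l' : 'I_L, l != l' ->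
      interior (polyhedron (regH l)) `&` interior (polyhedron (regH l')) = set0)
  (Hpiece : forall (l : 'I_L) x, polyhedron (regH l) x -> ustar x = aeval (pc l) x)
  (* sample points x_i, each in the interior of a UO region, u_i its local piece *)
  (Ns : nat) (xs : 'I_Ns -> 'rV[R]_n) (us : 'I_Ns -> affine R n)
  (Hsample : forall i : 'I_Ns, exists (Gamma : set 'rV[R]_n) (l : 'I_L),
      [/\ UO_region (fun l => polyhedron (regH l)) pc Gamma l,
          interior Gamma (xs i) & us i = pc l])
  (* the segment [x_alpha, x_beta] and the sample points y_0, ..., y_m on it *)
  (alpha beta : 'I_Ns) (m : nat) (ys : 'I_m.+1 -> 'I_Ns)
  (Hy0 : xs (ys ord0) = xs alpha)
  (Hym : xs (ys ord_max) = xs beta)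
  (Hyseg : forall r, segment (xs alpha) (xs beta) (xs (ys r)))
  (Hyall : forall i, segment (xs alpha) (xs beta) (xs i) ->
      exists r, xs (ys r) = xs i)
  (Hyord : forall r r' : 'I_m.+1, (r < r')%N ->
      dotp (xs beta - xs alpha) (xs (ys r)) < dotp (xs beta - xs alpha) (xs (ys r')))
  (* termination condition of the bisection procedure *)
  (Hterm : forall r : 'I_m.+1, forall r1 : 'I_m.+1, val r1 = (val r).+1 ->
      (aeval (us (ys r)) (xs (ys r)) - aeval (us (ys r1)) (xs (ys r))) *
      (aeval (us (ys r)) (xs (ys r1)) - aeval (us (ys r1)) (xs (ys r1))) <= 0) :
  forall i k : 'I_Ns,
    segment (xs alpha) (xs beta) (xs i) -> segment (xs alpha) (xs beta) (xs k) ->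
    (exists2 j : 'I_Ns, aeval (us i) (xs i) <= aeval (us j) (xs i)
                       & aeval (us j) (xs k) <= aeval (us k) (xs k)) /\
    (exists2 j : 'I_Ns, aeval (us j) (xs i) <= aeval (us i) (xs i)
                       & aeval (us k) (xs k) <= aeval (us j) (xs k)).
Proof.
have Hu : forall i, aeval (us i) (xs i) = ustar (xs i).
  move=> i; have [Ga [l [[_ Hsub _] Hint ->]]] := Hsample i.
  by symmetry; apply: Hpiece; apply: Hsub; exact: interior_subset Hint.
set xa := xs alpha; set xb := xs beta.
have Ht : forall (P Q : 'I_m.+1) tp tq, (P < Q)%N ->
    xs (ys P) = (1 - tp) *: xa + tp *: xb ->
    xs (ys Q) = (1 - tq) *: xa + tq *: xb -> tp < tq.
  move=> P Q tp tq PQ eP eQ.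
  have := Hyord P Q PQ; rewrite eP eQ !dotp_seg.
  have := @dotp_dd R n xa xb.
  set c := dotp _ xb - dotp _ xa => hc h.
  rewrite ltNge; apply/negP => hle.
  have : tq * c <= tp * c by apply: ler_wpM2r.
  lra.
pose G j p := aeval (us (ys (inord j))) (xs (ys (inord p))).
have HT : forall k, (k < m)%N ->
     (G k k - G k.+1 k) * (G k k.+1 - G k.+1 k.+1) <= 0.
  move=> k km; apply: Hterm; rewrite /= !inordK //; lia.
have HA : forall j j' p q r, ((p <= q <= r) || (r <= q <= p))%N ->
     (p <= m)%N -> (q <= m)%N -> (r <= m)%N ->
     0 < G j p - G j' p -> G j q - G j' q <= 0 -> G j r - G j' r <= 0.
  move=> j j' p q r hpqr pm qm rm h1 h2.
  case: (eqVneq p q) => epq.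
    by subst; move: h2; rewrite leNgt h1.
  case: (eqVneq q r) => eqr; first by subst.
  have [tp _ ep] := Hyseg (inord p).
  have [tq _ eq] := Hyseg (inord q).
  have [tr _ er] := Hyseg (inord r).
  move: h1 h2; rewrite /G ep eq er !aeval_seg => h1 h2.
  have key : forall t, aeval (us (ys (inord j))) xa + t * (aeval (us (ys (inord j))) xb - aeval (us (ys (inord j))) xa) -
    (aeval (us (ys (inord j'))) xa + t * (aeval (us (ys (inord j'))) xb - aeval (us (ys (inord j'))) xa)) =
    (aeval (us (ys (inord j))) xa - aeval (us (ys (inord j'))) xa) +
     t * ((aeval (us (ys (inord j))) xb - aeval (us (ys (inord j))) xa) - (aeval (us (ys (inord j'))) xb - aeval (us (ys (inord j'))) xa)).
    by move=> t; ring.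
  move: h1 h2; rewrite !key => h1 h2.
  apply: (@real_aff _ _ _ _ _ _ h1 h2).
  have lt : forall x y, (x <= m)%N -> (y <= m)%N -> (x < y)%N -> forall tx ty,
    xs (ys (inord x)) = (1 - tx) *: xa + tx *: xb ->
    xs (ys (inord y)) = (1 - ty) *: xa + ty *: xb -> tx < ty.
    by move=> x y xm ym xy tx ty; apply: Ht; rewrite !inordK //; lia.
  move/eqP: epq => epq; move/eqP: eqr => eqr.
  case/orP: hpqr => /andP[h3 h4]; [left|right]; apply/andP; split.
  - by apply: (lt p q) => //; lia.
  - by apply: (lt q r) => //; lia.
  - by apply: (lt r q) => //; lia.
  - by apply: (lt q p) => //; lia.
have main : forall i k : 'I_Ns,
    segment (xs alpha) (xs beta) (xs i) -> segment (xs alpha) (xs beta) (xs k) ->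
    exists2 j : 'I_Ns, aeval (us i) (xs i) <= aeval (us j) (xs i)
                       & aeval (us j) (xs k) <= aeval (us k) (xs k).
  move=> i k si sk.
  have [ri ei] := Hyall i si; have [rk ek] := Hyall k sk.
  have [j [jm h1 h2]] := @both _ G m HT HA _ _ (ltn_ord ri) (ltn_ord rk).
  exists (ys (inord j)).
    by move: h1; rewrite /G !inord_val (Hu (ys ri)) ei -(Hu i).
  by move: h2; rewrite /G !inord_val (Hu (ys rk)) ek -(Hu k).
move=> i k si sk; split; first exact: main.
have [j h1 h2] := main k i sk si.
by exists j.
Qed.
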